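(* Let $G=(V=V_0\uplus V_1,v_{\mathsf{init}},E,\gamma)$ be a quantitative graph game and let $d=\frac{p}{q}>1$ be the discount factor, with $p,q$ positive integers. Then the minimal non-zero difference between the costs of simple lassos in $G$ is a rational number with denominator at most $(p^{|V|}-q^{|V|})^2\cdot p^{2|V|}$.
   Context: A quantitative graph game $G=(V=V_0\uplus V_1, v_{\mathsf{init}},E,\gamma)$ consists of a finite directed graph $(V,E)$ in which every state has at least one outgoing edge, a partition of $V$ into $V_0$ and $V_1$, an initial state $v_{\mathsf{init}}$, and an integer cost function $\gamma:E\to\mathbb{Z}$. A lasso is an infinite path of the form $v_0v_1\dots v_n(s_0s_1\dots s_m)^{\omega}$ in $(V,E)$ starting at $v_{\mathsf{init}}$; it is simple if all the states $v_0,\dots,v_n,s_0,\dots,s_m$ are distinct. The cost of a lasso (or any play) $u_0u_1\dots$ with discount factor $d$ is $\sum_{k\ge0}\gamma(u_k,u_{k+1})/d^{k}$. *)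

(* Defs.v *)
From HB Require Import structures.
From mathcomp Require Import all_boot all_order all_algebra.
From mathcomp Require Import all_classical all_reals all_analysis.
Set Implicit Arguments. Unset Strict Implicit. Unset Printing Implicit Defensive.
Import Order.TTheory GRing.Theory Num.Theory numFieldNormedType.Exports.
Local Open Scope ring_scope.

(* A quantitative graph game on a finite set of states V.
   The cost function is given on all pairs of states but only ever
   evaluated on edges. *)
Record game (V : finType) := Game {
  V0 : {set V};            (* V1 is the complement ~: V0 *)
  vinit : V;
  edge : rel V;
  gamma : V -> V -> int;
  edge_total : forall v, exists w, edge v w
}.

(* The infinite play  st ++ cy ++ cy ++ ...  (stem st, cycle cy). *)
Definition lasso_play (V : finType) (G : game V) (st cy : seq V) (k : nat) : V :=
  if (k < size st)%N then nth (vinit G) st k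
  else nth (vinit G) cy ((k - size st) %% size cy)%N.

Definition is_lasso (V : finType) (G : game V) (st cy : seq V) : Prop :=
  (0 < size cy)%N /\ lasso_play G st cy 0 = vinit G /\
  forall k, edge G (lasso_play G st cy k) (lasso_play G st cy k.+1).

Definition simple_lasso (V : finType) (G : game V) (st cy : seq V) : Prop :=
  is_lasso G st cy /\ uniq (st ++ cy).

Definition lasso_cost (R : realType) (V : finType) (G : game V) (p q : nat)
  (st cy : seq V) : R :=
  limn (series (fun k : nat => ((
    (gamma G (lasso_play G st cy k) (lasso_play G st cy k.+1))%:~R
      / ((p%:R / q%:R) ^+ k)) : R))).

(* Main.v *)
From HB Require Import structures.
From mathcomp Require Import all_boot all_order all_algebra.
From mathcomp Require Import all_classical all_reals all_analysis.
From mathcomp Require Import ring lra zify.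
Require Import Defs.
Import Order.TTheory GRing.Theory Num.Theory numFieldNormedType.Exports.
Lemma exp_mono p q k : (q <= p)%N -> (q ^ k <= p ^ k)%N.
Proof. move=> h; elim: k => [|k IH] //; rewrite !expnS; exact: leq_mul. Qed.
Lemma step_mono p q k : (0 < q)%N -> (q <= p)%N -> (p ^ k - q ^ k <= p ^ k.+1 - q ^ k.+1)%N.
Proof.
move=> hq hqp; have := exp_mono _ _ k hqp; rewrite !expnS.
move: (p ^ k) (q ^ k) => P Q hPQ. nia.
Qed.
Lemma diff_mono p q k n : (0 < q)%N -> (q <= p)%N -> (k <= n)%N -> (p ^ k - q ^ k <= p ^ n - q ^ n)%N.
Proof.
move=> hq hqp /subnK <-; elim: (n - k)%N => [|t IH] //.
apply: leq_trans IH _; rewrite addSn; exact: (step_mono _ _ _ hq hqp).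
Qed.
Lemma Dbound p q m c n : (0 < q)%N -> (q <= p)%N -> (m + c <= n)%N ->
  (p ^ m * (p ^ c - q ^ c) <= p ^ n - q ^ n)%N.
Proof.
move=> hq hqp hn; apply: leq_trans (diff_mono _ _ _ _ hq hqp hn).
rewrite mulnBr -!expnD leq_sub2l // [X in (X <= _)%N]expnD leq_mul2r (exp_mono _ _ _ hqp) orbT //.
Qed.
Local Open Scope classical_set_scope.
Local Open Scope ring_scope.

Lemma bound_cvg (R : realType) (S : nat -> R) (L K x : R) (m : nat) :
  `|x| < 1 -> (forall n, (m <= n)%N -> `|S n - L| <= K * x ^+ n) ->
  S @ \oo --> L.
Proof.
move=> hx H.
apply: (squeeze_cvgr (f := fun n => L - K * x ^+ n) (h := fun n => L + K * x ^+ n)).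
- exists m => // n /= hn. have := H n hn. rewrite ler_distl. done.
- have := cvgB (cvg_cst L) (@cvgMr _ _ _ _ _ K _ (cvg_expr hx)). rewrite mulr0 subr0. exact.
- have := cvgD (cvg_cst L) (@cvgMr _ _ _ _ _ K _ (cvg_expr hx)). rewrite mulr0 addr0. exact.
Qed.

Lemma seriesS (R : realType) (u : nat -> R) n : series u n.+1 = series u n + u n.
Proof. by rewrite /series /= big_nat_recr. Qed.

Lemma geo_series (R : realType) (u : nat -> R) (m c : nat) (x : R) :
  (0 < c)%N -> 0 < x -> x < 1 ->
  (forall k, (m <= k)%N -> u (k + c)%N = x ^+ c * u k) ->
  series u @ \oo --> series u m + (series u (m + c)%N - series u m) / (1 - x ^+ c).
Proof.
move=> c0 x0 x1 hu.
set r := x ^+ c.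
have r1 : r < 1 by rewrite /r exprn_ilt1 ?ltW // -lt0n.
have r0 : 0 <= r by rewrite /r exprn_ge0 // ltW.
have rn0 : 1 - r != 0 by rewrite subr_eq0 eq_sym lt_eqF.
set L := _ + _.
have step1 : forall t, series u (m + t + c)%N = series u (m + c)%N + r * (series u (m + t)%N - series u m).
  elim=> [|t IH]; first by rewrite addn0 subrr mulr0 addr0.
  rewrite (addnS m t) addSn seriesS IH seriesS hu ?leq_addr //. rewrite /r. ring.
have step2 : forall n, (m <= n)%N -> series u (n + c)%N - L = r * (series u n - L).
  move=> n /subnKC <-. rewrite step1 /L. field. done.
set K := (\sum_(j < c) `|series u (m + j)%N - L|) / x ^+ (m + c).
have K0 : 0 <= K by apply: divr_ge0; [apply: sumr_ge0 => *; exact: normr_ge0 | rewrite exprn_ge0 // ltW].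
apply: (@bound_cvg R (series u) L K x m).
  by rewrite ger0_norm ?ltW.
elim/ltn_ind=> n IH hmn.
case: (ltnP n (m + c)) => hn.
  have hj : (n - m < c)%N by rewrite ltn_subLR.
  apply: (@le_trans _ _ (K * x ^+ (m + c))).
    rewrite /K mulfVK ?expf_neq0 ?gt_eqF //.
    rewrite (bigD1 (Ordinal hj)) //= subnKC // lerDl sumr_ge0 //.
  by rewrite ler_wpM2l // ler_wiXn2l ?ltW // ltnW.
have hn' : (m <= n - c)%N by rewrite leq_subRL ?(leq_trans _ hn) ?leq_addl // addnC.
have := step2 _ hn'. rewrite subnK ?(leq_trans _ hn) ?leq_addl // => ->.
rewrite normrM ger0_norm //.
have hlt : (n - c < n)%N by lia.
apply: (le_trans (ler_wpM2l r0 (IH _ hlt hn'))).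
by rewrite /r mulrCA -exprD subnKC ?(leq_trans _ hn) ?leq_addl.
Qed.

Lemma play_per (V : finType) (G : game V) (st cy : seq V) k :
  (size st <= k)%N -> lasso_play G st cy (k + size cy) = lasso_play G st cy k.
Proof.
move=> hk; rewrite /lasso_play.
have -> : (k + size cy < size st)%N = false by apply/negbTE; rewrite -leqNgt; lia.
have -> : (k < size st)%N = false by apply/negbTE; rewrite -leqNgt.
have -> : (k + size cy - size st = (k - size st) + size cy)%N by lia.
by rewrite modnDr.
Qed.

Lemma term_int (R : realType) (p q : nat) (g : int) k N : (0 < p)%N -> (0 < q)%N -> (k <= N)%N ->
  (g%:~R / ((p%:R / q%:R) ^+ k) : R) * p%:R ^+ N \is a Num.int.
Proof.
move=> hp hq hk.
have hp' : (p%:R : R) != 0 by rewrite pnatr_eq0 -lt0n.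
have hq' : (q%:R : R) != 0 by rewrite pnatr_eq0 -lt0n.
rewrite -(subnK hk) exprD expr_div_n invf_div.
have -> : g%:~R * ((q%:R : R) ^+ k / p%:R ^+ k) * (p%:R ^+ (N - k) * p%:R ^+ k) = g%:~R * q%:R ^+ k * p%:R ^+ (N - k).
  field. by rewrite expf_neq0.
by rewrite !rpredM ?rpredX ?intr_int ?rpred_nat.
Qed.

Lemma series_int (R : realType) (p q : nat) (g : nat -> int) n N : (0 < p)%N -> (0 < q)%N -> (n <= N)%N ->
  series (fun k => (g k)%:~R / ((p%:R / q%:R) ^+ k) : R) n * p%:R ^+ N \is a Num.int.
Proof.
move=> hp hq hn; rewrite /series /= big_mkord big_distrl /=.
apply: rpred_sum => k _; apply: term_int => //.
move: (ltn_ord k) hn. lia.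
Qed.

Lemma cost_closed (R : realType) (V : finType) (G : game V) (p q : nat) (st cy : seq V) :
  (0 < q)%N -> (q < p)%N -> (0 < size cy)%N ->
  lasso_cost R G p q st cy * ((p ^ size st * (p ^ size cy - q ^ size cy))%N)%:R \is a Num.int.
Proof.
move=> hq hpq c0.
have hp : (0 < p)%N by lia.
set m := size st; set c := size cy.
set g := fun k => gamma G (lasso_play G st cy k) (lasso_play G st cy k.+1).
set f := fun k => ((g k)%:~R / ((p%:R / q%:R) ^+ k) : R).
have -> : lasso_cost R G p q st cy = limn (series f) by [].
have hp' : (p%:R : R) != 0 by rewrite pnatr_eq0 -lt0n.
have hq' : (q%:R : R) != 0 by rewrite pnatr_eq0 -lt0n.
set x : R := q%:R / p%:R.
have hx0 : 0 < x by rewrite divr_gt0 ?ltr0n.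
have hx1 : x < 1 by rewrite ltr_pdivrMr ?ltr0n // mul1r ltr_nat.
have hu : forall k, (m <= k)%N -> f (k + c)%N = x ^+ c * f k.
  move=> k hk; rewrite /f /g play_per // -addSn play_per ?(leqW hk) //.
  rewrite exprD /x !expr_div_n. field.
  by rewrite !expf_neq0.
have := @geo_series R f m c x c0 hx0 hx1 hu.
move/(cvg_lim (@Rhausdorff R)) => ->.
have hlt : (q ^ c < p ^ c)%N by rewrite ltn_exp2r.
rewrite natrM natrB ?(ltnW hlt) // !natrX.
have hpc : (p%:R ^+ c - q%:R ^+ c : R) != 0.
  by rewrite subr_eq0 -!natrX eqr_nat gtn_eqF.
have hpm : (p%:R ^+ m : R) != 0 by rewrite expf_neq0.
have hpc' : (p%:R ^+ c : R) != 0 by rewrite expf_neq0.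
set S1 := series f m; set S2 := series f (m + c)%N.
have -> : (S1 + (S2 - S1) / (1 - x ^+ c)) * (p%:R ^+ m * (p%:R ^+ c - q%:R ^+ c))
   = (S1 * p%:R ^+ m) * (p%:R ^+ c - q%:R ^+ c) + S2 * p%:R ^+ (m + c) - (S1 * p%:R ^+ m) * p%:R ^+ c.
  rewrite /x expr_div_n exprD. field. by rewrite hpc hpc'.
pose si := fun n => (@series_int R p q g n n hp hq (leqnn n)).
apply: rpredB; [apply: rpredD; [apply: rpredM; [exact: si | by rewrite rpredB ?rpredX ?rpred_nat] | exact: si] | apply: rpredM; [exact: si | by rewrite rpredX ?rpred_nat]].
Qed.
Theorem corollary2 (R : realType) (V : finType) (G : game V) (p q : nat)
  (hq : (0 < q)%N) (hpq : (q < p)%N)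
  (st1 cy1 st2 cy2 : seq V) :
  simple_lasso G st1 cy1 -> simple_lasso G st2 cy2 ->
  lasso_cost R G p q st1 cy1 != lasso_cost R G p q st2 cy2 ->
  (forall st3 cy3 st4 cy4 : seq V,
     simple_lasso G st3 cy3 -> simple_lasso G st4 cy4 ->
     lasso_cost R G p q st3 cy3 != lasso_cost R G p q st4 cy4 ->
     `|lasso_cost R G p q st1 cy1 - lasso_cost R G p q st2 cy2|
       <= `|lasso_cost R G p q st3 cy3 - lasso_cost R G p q st4 cy4|) ->
  exists (a : int) (b : nat),
    (0 < b)%N /\
    (b <= (p ^ #|V| - q ^ #|V|) ^ 2 * p ^ (2 * #|V|))%N /\
    `|lasso_cost R G p q st1 cy1 - lasso_cost R G p q st2 cy2|
      = a%:~R / b%:R.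
Proof.
move=> [[c1 _] u1] [[c2 _] u2] _ _.
have hqp : (q <= p)%N by apply: ltnW.
have hn1 : (size st1 + size cy1 <= #|V|)%N by rewrite -size_cat -(card_uniqP u1) max_card.
have hn2 : (size st2 + size cy2 <= #|V|)%N by rewrite -size_cat -(card_uniqP u2) max_card.
have /intrP [N1 hN1] := cost_closed R V G p q st1 cy1 hq hpq c1.
have /intrP [N2 hN2] := cost_closed R V G p q st2 cy2 hq hpq c2.
move: hN1 hN2.
set D1 := (p ^ size st1 * (p ^ size cy1 - q ^ size cy1))%N.
set D2 := (p ^ size st2 * (p ^ size cy2 - q ^ size cy2))%N.
move=> hN1 hN2.
have hp : (0 < p)%N by apply: leq_trans hpq.
have D1pos : (0 < D1)%N by rewrite muln_gt0 expn_gt0 hp subn_gt0 ltn_exp2r.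
have D2pos : (0 < D2)%N by rewrite muln_gt0 expn_gt0 hp subn_gt0 ltn_exp2r.
have hD1 : (D1%:R : R) != 0 by rewrite pnatr_eq0 -lt0n.
have hD2 : (D2%:R : R) != 0 by rewrite pnatr_eq0 -lt0n.
have e1 : lasso_cost R G p q st1 cy1 = N1%:~R / D1%:R by rewrite -hN1 mulfK.
have e2 : lasso_cost R G p q st2 cy2 = N2%:~R / D2%:R by rewrite -hN2 mulfK.
exists `|N1 * D2%:R - N2 * D1%:R|, (D1 * D2)%N.
split; first by rewrite muln_gt0 D1pos.
split.
  have hb : (D1 * D2 <= (p ^ #|V| - q ^ #|V|) * (p ^ #|V| - q ^ #|V|))%N.
    by apply: leq_mul; apply: Dbound.
  by apply: (leq_trans hb); rewrite leq_pmulr // expn_gt0 hp.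
rewrite e1 e2 intr_norm (natrM _ D1 D2).
have -> : N1%:~R / D1%:R - N2%:~R / D2%:R = ((N1 * D2%:R - N2 * D1%:R)%:~R / (D1%:R * D2%:R) : R).
  rewrite rmorphB !rmorphM /= !mulrz_nat. field. by rewrite !pnatr_eq0 -!lt0n !subn_gt0 !ltn_exp2r // !expn_gt0 hp hpq.
rewrite normrM normfV (ger0_norm (x := D1%:R * D2%:R)) // mulr_ge0 //.
Qed.
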